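(* Let $S$ be a pogroup. In the full subcategory of $\mathbf{Pos}\text{-}S$ consisting of $S$-posets with trivial action, the pair $(Emb, Top)$ is a weak factorization system; in particular every $S$-poset map $f:X\to B$ between $S$-posets with trivial action factors as $f=g\circ m$ with $m:X\to Y$ an order-embedding, $g:Y\to B$ a topological monotone map, and $Y$ an $S$-poset with trivial action.
   Context: A pogroup is a group with a compatible partial order. $\mathbf{Pos}\text{-}S$: right $S$-posets and action-preserving monotone maps; trivial action means $as=a$ for all $a,s$. $Emb$ is the class of order-embeddings ($f(a)\le f(a')\iff a\le a'$); $Top$ is the class of monotone maps that are topological functors (posets as categories; a functor $G$ is topological if every $G$-structured source has a unique $G$-initial lift). A weak factorization system is a pair $(\mathcal L,\mathcal R)$ of morphism classes such that every morphism factors as an $\mathcal L$-morphism followed by an $\mathcal R$-morphism, $\mathcal R=\mathcal L^{\Box}$ and $\mathcal L={}^{\Box}\mathcal R$, where $\mathcal H^{\Box}$ and ${}^{\Box}\mathcal H$ denote the morphisms having the right, respectively left, lifting property (existence of diagonal fillers in commutative squares) against all members of $\mathcal H$. *)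

(* Defs.v *)
Set Implicit Arguments.
Unset Strict Implicit.

Record Pogroup := {
  pg_car :> Type;
  pg_mul : pg_car -> pg_car -> pg_car;
  pg_one : pg_car;
  pg_inv : pg_car -> pg_car;
  pg_le : pg_car -> pg_car -> Prop;
  pg_mulA : forall x y z, pg_mul x (pg_mul y z) = pg_mul (pg_mul x y) z;
  pg_mul1l : forall x, pg_mul pg_one x = x;
  pg_mul1r : forall x, pg_mul x pg_one = x;
  pg_mulVl : forall x, pg_mul (pg_inv x) x = pg_one;
  pg_mulVr : forall x, pg_mul x (pg_inv x) = pg_one;
  pg_le_refl : forall x, pg_le x x;
  pg_le_anti : forall x y, pg_le x y -> pg_le y x -> x = y;
  pg_le_trans : forall x y z, pg_le x y -> pg_le y z -> pg_le x z;
  pg_le_mull : forall x y z, pg_le x y -> pg_le (pg_mul z x) (pg_mul z y);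
  pg_le_mulr : forall x y z, pg_le x y -> pg_le (pg_mul x z) (pg_mul y z)
}.

Record SPoset (S : Pogroup) := {
  sp_car :> Type;
  sp_le : sp_car -> sp_car -> Prop;
  sp_act : sp_car -> pg_car S -> sp_car;
  sp_le_refl : forall a, sp_le a a;
  sp_le_anti : forall a b, sp_le a b -> sp_le b a -> a = b;
  sp_le_trans : forall a b c, sp_le a b -> sp_le b c -> sp_le a c;
  sp_act1 : forall a, sp_act a (@pg_one S) = a;
  sp_actM : forall a s t, sp_act (sp_act a s) t = sp_act a (@pg_mul S s t);
  sp_act_mono : forall a a' s s', sp_le a a' -> @pg_le S s s' ->
                  sp_le (sp_act a s) (sp_act a' s')
}.

Record SMap (S : Pogroup) (X Y : SPoset S) := {
  smap :> sp_car X -> sp_car Y;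
  smap_mono : forall a a', @sp_le S X a a' -> @sp_le S Y (smap a) (smap a');
  smap_act : forall a s, smap (@sp_act S X a s) = @sp_act S Y (smap a) s
}.

Definition trivial_action (S : Pogroup) (X : SPoset S) : Prop :=
  forall (a : sp_car X) (s : pg_car S), @sp_act S X a s = a.

Definition is_order_embedding (S : Pogroup) (X Y : SPoset S) (f : SMap X Y) : Prop :=
  forall a a' : sp_car X, @sp_le S Y (f a) (f a') <-> @sp_le S X a a'.

(* G-initial lift, for a monotone map G : Y -> B viewed as a functor between
   posets-as-categories, of the G-structured source (b, (b -> G (y i))_{i : I}):
   an object y0 with G y0 = b, y0 <= y i for all i, such that every z with
   G z <= b and z <= y i for all i satisfies z <= y0 (all commutativity
   conditions are automatic in thin categories). *)
Definition is_initial_lift (S : Pogroup) (Y B : SPoset S) (G : SMap Y B)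
  (b : sp_car B) (I : Type) (y : I -> sp_car Y) (y0 : sp_car Y) : Prop :=
  G y0 = b /\ (forall i, @sp_le S Y y0 (y i)) /\
  (forall z : sp_car Y, @sp_le S B (G z) b -> (forall i, @sp_le S Y z (y i)) -> @sp_le S Y z y0).

Definition is_topological (S : Pogroup) (Y B : SPoset S) (G : SMap Y B) : Prop :=
  forall (b : sp_car B) (I : Type) (y : I -> sp_car Y),
    (forall i, @sp_le S B b (G (y i))) ->
    exists y0, is_initial_lift G b y y0 /\
               (forall y1, is_initial_lift G b y y1 -> y1 = y0).

Definition lifts (S : Pogroup) (A B C D : SPoset S) (m : SMap A B) (g : SMap C D) : Prop :=
  forall (u : SMap A C) (v : SMap B D),
    (forall a, g (u a) = v (m a)) ->
    exists d : SMap B C, (forall a, d (m a) = u a) /\ (forall b, g (d b) = v b).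

(* Main.v *)
Require Import Defs.
From Stdlib Require Import Classical ClassicalEpsilon FunctionalExtensionality PropExtensionality.

Lemma lift_unique (S : Pogroup) (Y B : SPoset S) (G : SMap Y B) b (I : Type) (y : I -> sp_car Y) y0 y1 :
  is_initial_lift G b y y0 -> is_initial_lift G b y y1 -> y1 = y0.
Proof.
  intros [h1 [h2 h3]] [k1 [k2 k3]].
  apply sp_le_anti.
  - apply h3; [rewrite k1; apply sp_le_refl | exact k2].
  - apply k3; [rewrite h1; apply sp_le_refl | exact h2].
Qed.

Lemma top_lifts (S : Pogroup) (A B C D : SPoset S) (m : SMap A B) (g : SMap C D) :
  trivial_action B -> trivial_action C -> is_order_embedding m -> is_topological g -> lifts m g.
Proof.
  intros hB hC hm hg u v comm.
  assert (H : forall b : sp_car B, exists y0,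
    is_initial_lift g (v b) (fun i : {a : sp_car A | @sp_le S B b (m a)} => u (proj1_sig i)) y0).
  { intros b. destruct (hg (v b) {a : sp_car A | @sp_le S B b (m a)} (fun i => u (proj1_sig i)))
      as [y0 [Hy _]].
    - intros [a ha]; simpl. rewrite comm. apply smap_mono. exact ha.
    - exists y0; exact Hy. }
  pose (d0 := fun b => proj1_sig (constructive_indefinite_description _ (H b))).
  assert (spec : forall b, is_initial_lift g (v b)
            (fun i : {a : sp_car A | @sp_le S B b (m a)} => u (proj1_sig i)) (d0 b)).
  { intros b. unfold d0. exact (proj2_sig (constructive_indefinite_description _ (H b))). }
  assert (mono : forall b b', @sp_le S B b b' -> @sp_le S C (d0 b) (d0 b')).
  { intros b b' hbb. destruct (spec b) as [s1 [s2 s3]]. destruct (spec b') as [t1 [t2 t3]].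
    apply t3.
    - rewrite s1. apply smap_mono. exact hbb.
    - intros [a ha]. exact (s2 (exist _ a (sp_le_trans hbb ha))). }
  assert (act : forall b s, d0 (@sp_act S B b s) = @sp_act S C (d0 b) s).
  { intros b s. rewrite hB, hC. reflexivity. }
  exists {| smap := d0; smap_mono := mono; smap_act := act |}. simpl. split.
  - intros a. destruct (spec (m a)) as [s1 [s2 s3]]. apply sp_le_anti.
    + exact (s2 (exist (fun a0 => @sp_le S B (m a) (m a0)) a (sp_le_refl _))).
    + apply s3.
      * rewrite comm. apply sp_le_refl.
      * intros [a' ha']. simpl. apply smap_mono. apply hm. exact ha'.
  - intros b. destruct (spec b) as [s1 _]. exact s1.
Qed.

Section Bp.
Variables (S : Pogroup) (C D : SPoset S) (g : SMap C D) (b : sp_car D) (J : Type)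
  (y : J -> sp_car C).
Hypothesis hy : forall i, @sp_le S D b (g (y i)).
Hypothesis Hno : ~ exists y0, is_initial_lift g b y y0.

Definition Lc (c : sp_car C) : Prop := @sp_le S D (g c) b /\ forall i, @sp_le S C c (y i).

Definition bple (x x' : sum (sp_car C) unit) : Prop :=
  match x, x' with
  | inl c, inl c' => @sp_le S C c c'
  | inl c, inr _ => Lc c
  | inr _, inl c => exists i, @sp_le S C (y i) c
  | inr _, inr _ => True
  end.

Definition Bp : SPoset S.
Proof.
  refine (@Build_SPoset S (sum (sp_car C) unit) bple (fun x _ => x) _ _ _ _ _ _).
  - intros [c|[]]; simpl; [apply sp_le_refl | exact I].
  - intros [c|[]] [c'|[]]; simpl; intros h1 h2.
    + f_equal. apply sp_le_anti; assumption.
    + exfalso. apply Hno. destruct h2 as [i hi]. destruct h1 as [l1 l2].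
      assert (e : c = y i) by (apply sp_le_anti; [apply l2 | exact hi]).
      subst c. exists (y i). split; [|split].
      * apply sp_le_anti; [exact l1 | apply hy].
      * exact l2.
      * intros z hz1 hz2. apply hz2.
    + exfalso. apply Hno. destruct h1 as [i hi]. destruct h2 as [l1 l2].
      assert (e : c' = y i) by (apply sp_le_anti; [apply l2 | exact hi]).
      subst c'. exists (y i). split; [|split].
      * apply sp_le_anti; [exact l1 | apply hy].
      * exact l2.
      * intros z hz1 hz2. apply hz2.
    + reflexivity.
  - intros [c1|[]] [c2|[]] [c3|[]]; simpl; intros h1 h2; try exact I.
    + eapply sp_le_trans; eassumption.
    + destruct h2 as [l1 l2]. split.
      * eapply sp_le_trans; [apply smap_mono; exact h1 | exact l1].
      * intros i. eapply sp_le_trans; [exact h1 | apply l2].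
    + destruct h1 as [l1 l2]. destruct h2 as [i hi]. eapply sp_le_trans; [apply l2 | exact hi].
    + exact h1.
    + destruct h1 as [i hi]. exists i. eapply sp_le_trans; eassumption.
    + exact h2.
  - reflexivity.
  - reflexivity.
  - intros a a' s s' h _. exact h.
Defined.
End Bp.

Lemma lifts_top (S : Pogroup) (C D : SPoset S) (g : SMap C D) :
  trivial_action C -> trivial_action D ->
  (forall (A B : SPoset S) (m : SMap A B),
        trivial_action A -> trivial_action B ->
        is_order_embedding m -> lifts m g) -> is_topological g.
Proof.
  intros hC hD HL b I y hy.
  assert (Ex : exists y0, is_initial_lift g b y y0).
  { apply NNPP. intro Hno.
    pose (B' := @Bp S C D g b I y hy Hno).
    assert (minl : forall a a', @sp_le S C a a' -> @sp_le S B' (inl a) (inl a')) by (intros; exact H).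
    assert (ainl : forall a s, (inl (@sp_act S C a s) : sp_car B') = @sp_act S B' (inl a) s).
    { intros a s. rewrite hC. reflexivity. }
    pose (m := {| smap := (fun c => inl c : sp_car B'); smap_mono := minl; smap_act := ainl |}).
    assert (uid1 : forall a a', @sp_le S C a a' -> @sp_le S C a a') by auto.
    assert (uid2 : forall a s, @sp_act S C a s = @sp_act S C a s) by auto.
    pose (u := {| smap := (fun c => c); smap_mono := uid1; smap_act := uid2 |}).
    pose (v0 := fun x : sp_car B' => match x with inl c => g c | inr _ => b end).
    assert (vm : forall x x', @sp_le S B' x x' -> @sp_le S D (v0 x) (v0 x')).
    { intros [c|[]] [c'|[]]; simpl; intro h.
      - apply smap_mono. exact h.
      - destruct h as [l1 _]. exact l1.
      - destruct h as [i hi]. eapply sp_le_trans; [apply hy | apply smap_mono; exact hi].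
      - apply sp_le_refl. }
    assert (va : forall x s, v0 (@sp_act S B' x s) = @sp_act S D (v0 x) s).
    { intros x s. rewrite hD. reflexivity. }
    pose (v := {| smap := v0; smap_mono := vm; smap_act := va |}).
    destruct (HL C B' m hC (fun x s => eq_refl) ltac:(intros a a'; simpl; tauto) u v
      ltac:(intros a; reflexivity)) as [d [d1 d2]].
    apply Hno. exists (d (inr tt)). split; [|split].
    - exact (d2 (inr tt)).
    - intros i. apply (@sp_le_trans S C _ (d (m (y i)))).
      + apply smap_mono. simpl. exists i. apply sp_le_refl.
      + rewrite d1. apply sp_le_refl.
    - intros z hz1 hz2. apply (@sp_le_trans S C _ (d (m z))).
      + rewrite d1. apply sp_le_refl.
      + apply smap_mono. simpl. split; assumption. }
  destruct Ex as [y0 Hy0]. exists y0. split; [exact Hy0|].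
  intros y1 Hy1. eapply lift_unique; [exact Hy0 | exact Hy1].
Qed.

Section Fact.
Variables (S : Pogroup) (X B : SPoset S) (f : SMap X B).
Hypothesis hX : trivial_action X.
Hypothesis hB : trivial_action B.

Definition FY : SPoset S.
Proof.
  refine (@Build_SPoset S (sp_car B * (sp_car X -> Prop))%type
    (fun p q => @sp_le S B (fst p) (fst q) /\ forall z, snd p z -> snd q z)
    (fun p _ => p) _ _ _ _ _ _).
  - intros [a P]; simpl. split; [apply sp_le_refl | auto].
  - intros [a P] [a' P']; simpl. intros [h1 h2] [k1 k2].
    f_equal; [apply sp_le_anti; assumption|].
    apply functional_extensionality. intro z. apply propositional_extensionality. split; auto.
  - intros [a P] [a' P'] [a'' P'']; simpl. intros [h1 h2] [k1 k2].
    split; [eapply sp_le_trans; eassumption | auto].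
  - reflexivity.
  - reflexivity.
  - intros p p' s s' h _. exact h.
Defined.

Definition fm0 (x : sp_car X) : sp_car FY := (f x, fun z => @sp_le S X z x).

Lemma fm_mono : forall a a', @sp_le S X a a' -> @sp_le S FY (fm0 a) (fm0 a').
Proof.
  intros a a' h. simpl. split; [apply smap_mono; exact h|].
  intros z hz. eapply sp_le_trans; eassumption.
Qed.

Lemma fm_act : forall a s, fm0 (@sp_act S X a s) = @sp_act S FY (fm0 a) s.
Proof. intros a s. rewrite hX. reflexivity. Qed.

Definition fm : SMap X FY := {| smap := fm0; smap_mono := fm_mono; smap_act := fm_act |}.

Lemma fg_mono : forall a a' : sp_car FY, @sp_le S FY a a' -> @sp_le S B (fst a) (fst a').
Proof. intros a a' [h _]. exact h. Qed.

Lemma fg_act : forall (a : sp_car FY) s, fst (@sp_act S FY a s) = @sp_act S B (fst a) s.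
Proof. intros a s. rewrite hB. reflexivity. Qed.

Definition fg : SMap FY B := {| smap := (fun a : sp_car FY => fst a : sp_car B); smap_mono := fg_mono; smap_act := fg_act |}.

Lemma fact_ok : trivial_action FY /\ is_order_embedding fm /\ is_topological fg /\
       (forall x, fg (fm x) = f x).
Proof.
  split; [intros a s; reflexivity|]. split; [|split].
  - intros a a'. simpl. split.
    + intros [_ h]. apply h. apply sp_le_refl.
    + apply fm_mono.
  - intros b I y hy.
    assert (Hl : is_initial_lift fg b y ((b, fun z => forall i, snd (y i) z) : sp_car FY)).
    { split; [reflexivity|split].
      - intros i. simpl. split; [apply hy | auto].
      - intros [c P] h1 h2. simpl in *. split; [exact h1|].
        intros z hz i. destruct (h2 i) as [_ k]. apply k. exact hz. }
    exists (b, fun z => forall i, snd (y i) z). split; [exact Hl|].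
    intros y1 Hy1. eapply lift_unique; [exact Hl | exact Hy1].
  - intros x. reflexivity.
Qed.
End Fact.

Theorem mainTheorem10 (S : Pogroup) :
  (* factorization: every morphism factors as an Emb followed by a Top,
     through an S-poset with trivial action *)
  (forall (X B : SPoset S) (f : SMap X B),
     trivial_action X -> trivial_action B ->
     exists (Y : SPoset S) (m : SMap X Y) (g : SMap Y B),
       trivial_action Y /\ is_order_embedding m /\ is_topological g /\
       (forall x, g (m x) = f x)) /\
  (* Top = Emb^box (in the full subcategory of trivial-action S-posets) *)
  (forall (C D : SPoset S) (g : SMap C D),
     trivial_action C -> trivial_action D ->
     (is_topological g <->
      forall (A B : SPoset S) (m : SMap A B),
        trivial_action A -> trivial_action B ->
        is_order_embedding m -> lifts m g)) /\
  (* Emb = ^box Top (in the full subcategory of trivial-action S-posets) *)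
  (forall (A B : SPoset S) (m : SMap A B),
     trivial_action A -> trivial_action B ->
     (is_order_embedding m <->
      forall (C D : SPoset S) (g : SMap C D),
        trivial_action C -> trivial_action D ->
        is_topological g -> lifts m g)).
Proof.
  split; [|split].
  - intros X B f hX hB. exists (@FY S X B), (@fm S X B f hX), (@fg S X B hB).
    exact (@fact_ok S X B f hX hB).
  - intros C D g hC hD. split.
    + intros ht A B m hA hB hm. eapply top_lifts; eassumption.
    + eapply lifts_top; eassumption.
  - intros A B m hA hB. split.
    + intros hm C D g hC hD ht. eapply top_lifts; eassumption.
    + intros HL.
      destruct (@fact_ok S A B m hA hB) as [hY [hem [htop hcomm]]].
      assert (i1 : forall a a', @sp_le S B a a' -> @sp_le S B a a') by auto.
      assert (i2 : forall a s, @sp_act S B a s = @sp_act S B a s) by auto.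
      pose (idB := {| smap := (fun c => c); smap_mono := i1; smap_act := i2 |}).
      destruct (HL _ _ (@fg S A B hB) hY hB htop (@fm S A B m hA) idB hcomm) as [d [d1 _]].
      intros a a'. split.
      * intro h. apply hem. rewrite <- (d1 a), <- (d1 a'). apply smap_mono. exact h.
      * apply smap_mono.
Qed.
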